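(* For any diagonal section $\delta$ and all $x,y\in[0,1]$, $$\overline{C}_\delta(x,y)=\min\left\{x,\;y,\;\max\{x,y\}-\frac12\left(\widehat{\delta}(x)+\widehat{\delta}(y)+\mathrm{TV}_{\min\{x,y\}}^{\max\{x,y\}}(\widehat{\delta})\right)\right\}.$$
   Context: $\mathbb{I}=[0,1]$. A (bivariate) copula is a function $C\colon\mathbb{I}^2\to\mathbb{I}$ with $C(x,0)=C(0,y)=0$, $C(x,1)=x$, $C(1,y)=y$ for all $x,y$, and $C(b,d)+C(a,c)-C(b,c)-C(a,d)\ge 0$ for all $a\le b$, $c\le d$. A diagonal section is a function $\delta\colon\mathbb{I}\to\mathbb{I}$ with $\delta(x)\le x$ for all $x$, $0\le\delta(y)-\delta(x)\le 2(y-x)$ whenever $x\le y$, and $\delta(1)=1$. Write $\widehat{\delta}(x)=x-\delta(x)$, and $\mathrm{TV}_x^y(f)$ for the total variation of $f$ on $[x,y]$ ($x\le y$). Define $\overline{C}_\delta(x,y)=\sup\{C(x,y): C \text{ a copula with } C(t,t)=\delta(t)\ \forall t\in\mathbb{I}\}$. *)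

(* Defs.v *)
From mathcomp Require Import all_boot all_order all_algebra.
From mathcomp Require Import all_classical all_reals all_analysis.
Set Implicit Arguments. Unset Strict Implicit. Unset Printing Implicit Defensive.
Import Order.TTheory GRing.Theory Num.Theory.
Local Open Scope classical_set_scope.
Local Open Scope ring_scope.

(* Functions are total on R; only their values on [0,1] matter. *)
Definition in01 {R : realType} (x : R) := 0 <= x <= 1.

Definition is_copula {R : realType} (C : R -> R -> R) : Prop :=
  (forall x y, in01 x -> in01 y -> in01 (C x y)) /\
  (forall x, in01 x -> C x 0 = 0 /\ C 0 x = 0 /\ C x 1 = x /\ C 1 x = x) /\
  (forall a b c d, in01 a -> in01 b -> in01 c -> in01 d -> a <= b -> c <= d ->
     0 <= C b d + C a c - C b c - C a d).

Definition is_diagonal_section {R : realType} (delta : R -> R) : Prop :=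
  (forall x, in01 x -> in01 (delta x)) /\
  (forall x, in01 x -> delta x <= x) /\
  (forall x y, in01 x -> in01 y -> x <= y ->
     0 <= delta y - delta x <= 2 * (y - x)) /\
  delta 1 = 1.

Definition delta_hat {R : realType} (delta : R -> R) : R -> R :=
  fun x => x - delta x.

Definition Cbar {R : realType} (delta : R -> R) (x y : R) : R :=
  sup [set C x y | C in [set C : R -> R -> R | is_copula C /\
                          (forall t, in01 t -> C t t = delta t)]].

(* Main.v *)
Require Import Defs.
From mathcomp Require Import all_boot all_order all_algebra.
From mathcomp Require Import all_classical all_reals all_analysis.
From mathcomp Require Import lra ring.
Import Order.TTheory GRing.Theory Num.Theory.
Local Open Scope ring_scope.

Section Generic.
Context {R : realType}.
Implicit Types (F G : R -> R -> R) (a b c d p q r s u v : R).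

Definition V2 F a b c d := F b d - F a d - F b c + F a c.

Definition inc2 F := forall a b c d, in01 a -> in01 b -> in01 c -> in01 d ->
  a <= b -> c <= d -> 0 <= V2 F a b c d.

Lemma V2xx F a c d : V2 F a a c d = 0.
Proof. rewrite /V2; ring. Qed.

Lemma V2yy F a b c : V2 F a b c c = 0.
Proof. rewrite /V2; ring. Qed.

Lemma inc2D {F G} : inc2 F -> inc2 G -> inc2 (fun u v => F u v + G u v).
Proof.
move=> hF hG a b c d ha hb hc hd ab cd.
have := hF a b c d ha hb hc hd ab cd; have := hG a b c d ha hb hc hd ab cd.
rewrite /V2; lra.
Qed.

Lemma inc2Z k F : 0 <= k -> inc2 F -> inc2 (fun u v => k * F u v).
Proof.
move=> k0 hF a b c d ha hb hc hd ab cd.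
have := hF a b c d ha hb hc hd ab cd.
rewrite /V2 => h.
have -> : k * F b d - k * F a d - k * F b c + k * F a c = k * (F b d - F a d - F b c + F a c) by ring.
exact: mulr_ge0.
Qed.

Lemma inc2_ext {F G} : (forall u v, in01 u -> in01 v -> F u v = G u v) -> inc2 F -> inc2 G.
Proof.
move=> e hF a b c d ha hb hc hd ab cd.
by rewrite /V2 -!e //; apply: hF.
Qed.

Lemma inc2T {F} : inc2 F -> inc2 (fun u v => F v u).
Proof.
move=> hF a b c d ha hb hc hd ab cd.
have := hF c d a b hc hd ha hb cd ab; rewrite /V2; lra.
Qed.

Definition ndec (f : R -> R) := forall u v, in01 u -> in01 v -> u <= v -> f u <= f v.

Lemma inc2_prod {f g} : ndec f -> ndec g -> inc2 (fun u v => f u * g v).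
Proof.
move=> hf hg a b c d ha hb hc hd ab cd.
have -> : V2 (fun u v => f u * g v) a b c d = (f b - f a) * (g d - g c).
  by rewrite /V2; ring.
apply: mulr_ge0; rewrite subr_ge0; [exact: hf | exact: hg].
Qed.

Lemma min4 (A B C D : R) : A <= B -> C <= D ->
  0 <= Num.min B D - Num.min A D - Num.min B C + Num.min A C.
Proof.
move=> h1 h2.
case: (leP A D) => h3; case: (leP B D) => h4; case: (leP A C) => h5; case: (leP B C) => h6;
rewrite ?(min_l h3) ?(min_r (ltW h3)) ?(min_l h4) ?(min_r (ltW h4)) ?(min_l h5) ?(min_r (ltW h5)) ?(min_l h6) ?(min_r (ltW h6)); lra.
Qed.

Lemma inc2_min {f g} : ndec f -> ndec g -> inc2 (fun u v => Num.min (f u) (g v)).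
Proof.
move=> hf hg a b c d ha hb hc hd ab cd.
by apply: min4; [exact: hf | exact: hg].
Qed.

Definition clamp p q u := Num.max p (Num.min u q).

Lemma clamp_in {p q u} : p <= q -> p <= clamp p q u <= q.
Proof.
move=> pq; rewrite /clamp.
case: (leP u q) => h1; rewrite ?(min_l h1) ?(min_r (ltW h1));
case: (leP p u) => h2; rewrite ?(max_r h2) ?(max_l (ltW h2)) ?(max_r pq) ?(max_l pq);
apply/andP; split; lra.
Qed.

Lemma clamp_in01 {p q u} : in01 p -> in01 q -> p <= q -> in01 (clamp p q u).
Proof.
move=> /andP[p0 p1] /andP[q0 q1] pq; have /andP[h1 h2] := @clamp_in p q u pq.
apply/andP; split; lra.
Qed.

Lemma clamp_mono {p q u v} : p <= q -> u <= v -> clamp p q u <= clamp p q v.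
Proof.
move=> pq uv; rewrite /clamp.
case: (leP u q) => h1; rewrite ?(min_l h1) ?(min_r (ltW h1));
case: (leP v q) => h3; rewrite ?(min_l h3) ?(min_r (ltW h3));
case: (leP p u) => h2; rewrite ?(max_r h2) ?(max_l (ltW h2)) ?(max_r pq) ?(max_l pq);
case: (leP p v) => h4; rewrite ?(max_r h4) ?(max_l (ltW h4)) ?(max_r pq) ?(max_l pq); lra.
Qed.

Lemma clamp_id {p q u} : p <= u -> u <= q -> clamp p q u = u.
Proof. by move=> pu uq; rewrite /clamp (min_l uq) (max_r pu). Qed.

Lemma clamp_lo {p q u} : p <= q -> u <= p -> clamp p q u = p.
Proof.
move=> pq up; rewrite /clamp (min_l (le_trans up pq)); exact: max_l.
Qed.

Lemma clamp_hi {p q u} : p <= q -> q <= u -> clamp p q u = q.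
Proof. by move=> pq qu; rewrite /clamp (min_r qu) (max_r pq). Qed.

Definition restr F p q r s u v := V2 F p (clamp p q u) r (clamp r s v).

Lemma V2_restr F p q r s a b c d :
  V2 (restr F p q r s) a b c d =
  V2 F (clamp p q a) (clamp p q b) (clamp r s c) (clamp r s d).
Proof. rewrite /V2 /restr /V2; ring. Qed.

Lemma inc2_restr F p q r s : in01 p -> in01 q -> in01 r -> in01 s -> p <= q -> r <= s ->
  inc2 F -> inc2 (restr F p q r s).
Proof.
move=> hp hq hr hs pq rs hF a b c d ha hb hc hd ab cd.
rewrite V2_restr; apply: hF; try exact: clamp_in01; exact: clamp_mono.
Qed.

Lemma split1 p q a b : p <= q -> a <= b ->
  exists a' b', [/\ a <= a', a' <= b', b' <= b &
    ((a' = clamp p q a /\ b' = clamp p q b) \/ (a' = b' /\ clamp p q a = clamp p q b))].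
Proof.
move=> pq ab.
case: (leP b p) => bp.
  exists b, b; split => //; right; split => //.
  by rewrite !clamp_lo // (le_trans ab).
case: (leP q a) => qa.
  exists a, a; split => //; right; split => //.
  by rewrite !clamp_hi // (le_trans qa).
case: (leP a p) => ap; case: (leP b q) => bq.
- exists p, b; split => //; try lra; left; split.
  + by rewrite clamp_lo.
  + by rewrite clamp_id //; lra.
- exists p, q; split => //; try lra; left; split.
  + by rewrite clamp_lo.
  + by rewrite clamp_hi //; lra.
- exists a, b; split => //; try lra; left; split.
  + by rewrite clamp_id //; lra.
  + by rewrite clamp_id //; lra.
- exists a, q; split => //; try lra; left; split.
  + by rewrite clamp_id //; lra.
  + by rewrite clamp_hi //; lra.
Qed.

Lemma inc2_sub_restr F p q r s : in01 p -> in01 q -> in01 r -> in01 s -> p <= q -> r <= s ->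
  inc2 F -> inc2 (fun u v => F u v - restr F p q r s u v).
Proof.
move=> hp hq hr hs pq rs hF a b c d ha hb hc hd ab cd.
have -> : V2 (fun u v => F u v - restr F p q r s u v) a b c d =
   V2 F a b c d - V2 (restr F p q r s) a b c d by rewrite /V2; ring.
rewrite V2_restr subr_ge0.
have [a' [b' [aa' a'b' b'b ea]]] := @split1 p q a b pq ab.
have [c' [d' [cc' c'd' d'd ec]]] := @split1 r s c d rs cd.
have in01b (x y z : R) : in01 x -> in01 z -> x <= y -> y <= z -> in01 y.
  move=> /andP[x0 x1] /andP[z0 z1] xy yz; apply/andP; split; lra.
have ha' : in01 a' := in01b a a' b ha hb aa' (le_trans a'b' b'b).
have hb' : in01 b' := in01b a b' b ha hb (le_trans aa' a'b') b'b.
have hc' : in01 c' := in01b c c' d hc hd cc' (le_trans c'd' d'd).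
have hd' : in01 d' := in01b c d' d hc hd (le_trans cc' c'd') d'd.
have E : V2 F a b c d = V2 F a a' c d + V2 F b' b c d + V2 F a' b' c c'
   + V2 F a' b' d' d + V2 F a' b' c' d' by rewrite /V2; ring.
have H1 := hF a a' c d ha ha' hc hd aa' cd.
have H2 := hF b' b c d hb' hb hc hd b'b cd.
have H3 := hF a' b' c c' ha' hb' hc hc' a'b' cc'.
have H4 := hF a' b' d' d ha' hb' hd' hd a'b' d'd.
have H5 := hF a' b' c' d' ha' hb' hc' hd' a'b' c'd'.
have -> : V2 F (clamp p q a) (clamp p q b) (clamp r s c) (clamp r s d) = V2 F a' b' c' d'.
  case: ea => [[-> ->]|[ea1 ea2]]; case: ec => [[-> ->]|[ec1 ec2]] //;
  by rewrite ?ea1 ?ea2 ?ec1 ?ec2 ?V2xx ?V2yy.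
rewrite E; lra.
Qed.

End Generic.
Lemma variation_cons {R : realType} a b (f : R -> R) t s :
  variation a b f (t :: s) = `|f t - f a| + variation t b f s.
Proof. by rewrite /variation /= big_nat_recl. Qed.

Section TV.
Context {R : realType} (delta : R -> R) (Hd : is_diagonal_section delta).
Local Notation h := (delta_hat delta).

Lemma h_lip {a b} : in01 a -> in01 b -> a <= b -> `|h b - h a| <= b - a.
Proof.
case: Hd => _ [_ [H3 _]] ha hb ab.
have /andP[e1 e2] := H3 a b ha hb ab.
rewrite /delta_hat ler_norml; apply/andP; split; lra.
Qed.

Lemma h_ge0 {t} : in01 t -> 0 <= h t.
Proof. case: Hd => _ [H2 _] ht; have := H2 t ht; rewrite /delta_hat; lra. Qed.

Lemma h0 : h 0 = 0.
Proof.
case: Hd => H1 [H2 _].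
have i0 : in01 (0:R) by rewrite /in01 lexx ler01.
have := H2 0 i0; have /andP[e1 _] := H1 0 i0; rewrite /delta_hat; lra.
Qed.

Lemma h1 : h 1 = 0.
Proof. case: Hd => _ [_ [_ H4]]; rewrite /delta_hat H4; lra. Qed.

Lemma var_le {a b s} : 0 <= a -> b <= 1 -> itv_partition a b s ->
  variation a b h s <= b - a.
Proof.
elim: s a => [|t s IH] a a0 b1 hs.
  by rewrite variation_nil (itv_partition_nil hs) subrr.
have ht := itv_partition_cons hs.
have at' : a < t by case: hs => /= /andP[].
have tb := itv_partition_le ht.
rewrite variation_cons.
have := IH t (le_trans a0 (ltW at')) b1 ht.
have := @h_lip a t _ _ (ltW at').
rewrite /in01; move=> H; have := H (introT andP (conj a0 (le_trans (ltW at') (le_trans tb b1))))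
  (introT andP (conj (le_trans a0 (ltW at')) (le_trans tb b1))).
lra.
Qed.

Lemma TV_le {a b} : 0 <= a -> a <= b -> b <= 1 ->
  (total_variation a b h <= (b - a)%:E)%E.
Proof.
move=> a0 ab b1; apply: ge_ereal_sup => _ [_ [s hs <-] <-].
by rewrite lee_fin; apply: var_le.
Qed.

Definition tv a b := fine (total_variation a b h).

Lemma tvE {a b} : 0 <= a -> a <= b -> b <= 1 -> (tv a b)%:E = total_variation a b h.
Proof.
move=> a0 ab b1; rewrite /tv fineK // ge0_fin_numE ?total_variation_ge0 //.
apply: le_lt_trans; first exact: (TV_le a0 ab b1). exact: ltry.
Qed.

Lemma tv_add {a c b} : 0 <= a -> a <= c -> c <= b -> b <= 1 -> tv a b = tv a c + tv c b.
Proof.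
move=> a0 ac cb b1.
have := total_variationD h ac cb.
rewrite -(tvE a0 (le_trans ac cb) b1) -(tvE a0 ac (le_trans cb b1)).
rewrite -(tvE (le_trans a0 ac) cb b1) -EFinD => /eqP; rewrite eqe => /eqP //.
Qed.

Lemma tv_ge {a b} : 0 <= a -> a <= b -> b <= 1 -> `|h b - h a| <= tv a b.
Proof.
move=> a0 ab b1; rewrite -lee_fin tvE //; exact: total_variation_ge.
Qed.

Lemma tv_le {a b} : 0 <= a -> a <= b -> b <= 1 -> tv a b <= b - a.
Proof. by move=> a0 ab b1; rewrite -lee_fin tvE //; apply: TV_le. Qed.

Lemma tvxx a : tv a a = 0.
Proof. by rewrite /tv total_variationxx. Qed.

Definition Pp t := (h t + tv 0 t) / 2.
Definition Nn t := (tv 0 t - h t) / 2.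
Definition phi t := t - tv 0 t.

Lemma inc_facts {u v} : in01 u -> in01 v -> u <= v ->
  [/\ tv 0 v = tv 0 u + tv u v, `|h v - h u| <= tv u v & tv u v <= v - u].
Proof.
move=> /andP[u0 u1] /andP[v0 v1] uv; split.
- by apply: tv_add.
- exact: tv_ge.
- exact: tv_le.
Qed.

Lemma Pp_ndec : ndec Pp.
Proof.
move=> u v hu hv uv; have [e1 e2 e3] := inc_facts hu hv uv.
move: e2; rewrite ler_norml /Pp e1 => /andP[f1 f2]; lra.
Qed.

Lemma Nn_ndec : ndec Nn.
Proof.
move=> u v hu hv uv; have [e1 e2 e3] := inc_facts hu hv uv.
move: e2; rewrite ler_norml /Nn e1 => /andP[f1 f2]; lra.
Qed.

Lemma phi_ndec : ndec phi.
Proof.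
move=> u v hu hv uv; have [e1 e2 e3] := inc_facts hu hv uv.
rewrite /phi e1; lra.
Qed.

Lemma NleP {u} : in01 u -> Nn u <= Pp u.
Proof. move=> hu; have := h_ge0 hu; rewrite /Nn /Pp; lra. Qed.

Lemma P1N1 : Pp 1 = Nn 1.
Proof. rewrite /Pp /Nn h1; lra. Qed.

Lemma Pp0 : Pp 0 = 0.
Proof. by rewrite /Pp h0 tvxx; lra. Qed.
Lemma Nn0 : Nn 0 = 0.
Proof. by rewrite /Nn h0 tvxx; lra. Qed.
Lemma phi0 : phi 0 = 0.
Proof. by rewrite /phi tvxx; lra. Qed.

Lemma sumPN u : phi u + Pp u + Nn u = u.
Proof. rewrite /phi /Pp /Nn; lra. Qed.

Lemma difPN u : Pp u - Nn u = h u.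
Proof. rewrite /Pp /Nn; lra. Qed.


Definition M u v := Num.min (phi u) (phi v) + Num.min (Pp u) (Nn v).
Definition Lt u v := Num.min (Pp v) (Nn u).
Definition B u v := M u v + Lt u v.

Lemma inc2_M : inc2 M.
Proof.
apply: inc2D; apply: inc2_min; [exact: phi_ndec|exact: phi_ndec|exact: Pp_ndec|exact: Nn_ndec].
Qed.

Lemma inc2_Lt : inc2 Lt.
Proof. by apply: (inc2_ext _ (inc2T (inc2_min Pp_ndec Nn_ndec))). Qed.

Lemma inc2_B : inc2 B.
Proof. exact: inc2D inc2_M inc2_Lt. Qed.

Lemma i01_0 : in01 (0:R). Proof. by rewrite /in01 lexx ler01. Qed.
Lemma i01_1 : in01 (1:R). Proof. by rewrite /in01 lexx ler01. Qed.

Ltac mn := rewrite ?min_l ?min_r //.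

Lemma M_ge {u v} : in01 u -> in01 v -> v <= u -> M u v = phi v + Nn v.
Proof.
move=> hu hv vu; rewrite /M (min_r (phi_ndec _ _ hv hu vu)) min_r //.
exact: le_trans (NleP hv) (Pp_ndec _ _ hv hu vu).
Qed.

Lemma M_u1 {u} : in01 u -> M u 1 = phi u + Pp u.
Proof.
move=> hu; have /andP[u0 u1] := hu.
rewrite /M (min_l (phi_ndec _ _ hu i01_1 u1)) min_l // -P1N1.
exact: Pp_ndec _ _ hu i01_1 u1.
Qed.

Lemma M_1v {v} : in01 v -> M 1 v = phi v + Nn v.
Proof. move=> hv; have /andP[v0 v1] := hv; exact: M_ge i01_1 hv v1. Qed.

Lemma M_u0 {u} : in01 u -> M u 0 = 0.
Proof. move=> hu; have /andP[u0 u1] := hu; by rewrite (M_ge hu i01_0 u0) phi0 Nn0 addr0. Qed.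

Lemma M_0v {v} : in01 v -> M 0 v = 0.
Proof.
move=> hv; have /andP[v0 v1] := hv.
rewrite /M (min_l (phi_ndec _ _ i01_0 hv v0)) phi0 Pp0 min_l ?addr0 //.
by rewrite -Nn0; exact: Nn_ndec _ _ i01_0 hv v0.
Qed.

Lemma Lt_le {u v} : in01 u -> in01 v -> u <= v -> Lt u v = Nn u.
Proof.
move=> hu hv uv; rewrite /Lt min_r //.
exact: le_trans (NleP hu) (Pp_ndec _ _ hu hv uv).
Qed.

Lemma Lt_1v {v} : in01 v -> Lt 1 v = Pp v.
Proof.
move=> hv; have /andP[v0 v1] := hv; rewrite /Lt min_l // -P1N1.
exact: Pp_ndec _ _ hv i01_1 v1.
Qed.

Lemma Lt_u0 {u} : in01 u -> Lt u 0 = 0.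
Proof.
move=> hu; have /andP[u0 u1] := hu; rewrite /Lt Pp0 min_l //.
by rewrite -Nn0; exact: Nn_ndec _ _ i01_0 hu u0.
Qed.

Lemma Lt_0v {v} : in01 v -> Lt 0 v = 0.
Proof. move=> hv; have /andP[v0 v1] := hv; by rewrite (Lt_le i01_0 hv v0) Nn0. Qed.

Lemma copula_of (C : R -> R -> R) : inc2 C ->
  (forall u, in01 u -> C u 0 = 0 /\ C 0 u = 0 /\ C u 1 = u /\ C 1 u = u) ->
  is_copula C.
Proof.
move=> hC hb; split; last split => //.
- move=> u v hu hv.
  have [e1 [e2 [e3 e4]]] := hb u hu; have [f1 [f2 [f3 f4]]] := hb v hv.
  have [g1 [g2 [g3 g4]]] := hb 0 i01_0.
  have /andP[u0 u1] := hu; have /andP[v0 v1] := hv.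
  have H1 := hC 0 u 0 v i01_0 hu i01_0 hv u0 v0.
  have H2 := hC 0 u v 1 i01_0 hu hv i01_1 u0 v1.
  move: H1 H2; rewrite /V2 => H1 H2.
  have := hb 1 i01_1 => -[k1 [k2 _]].
  apply/andP; split; lra.
- move=> a b c d ha hb' hc hd ab cd.
  have := hC a b c d ha hb' hc hd ab cd; rewrite /V2; lra.
Qed.

Lemma B_copula : is_copula B.
Proof.
apply: copula_of; first exact: inc2_B.
move=> u hu; have /andP[u0 u1] := hu; rewrite /B; split; [|split; [|split]].
- by rewrite M_u0 // Lt_u0 // addr0.
- by rewrite M_0v // Lt_0v // addr0.
- rewrite M_u1 // (Lt_le hu i01_1 u1); exact: sumPN.
- rewrite M_1v // Lt_1v // -addrA (addrC (Nn u)) addrA; exact: sumPN.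
Qed.

Lemma B_diag t : in01 t -> B t t = delta t.
Proof.
move=> ht; rewrite /B (M_ge ht ht (lexx t)) (Lt_le ht ht (lexx t)).
have := sumPN t; have := difPN t; rewrite /delta_hat; lra.
Qed.

Section Swap.
Context (x y : R) (hx : in01 x) (hy : in01 y) (xy : x <= y).

Let x0 : 0 <= x. Proof. by case/andP: hx. Qed.
Let x1 : x <= 1. Proof. by case/andP: hx. Qed.
Let y0 : 0 <= y. Proof. by case/andP: hy. Qed.
Let y1 : y <= 1. Proof. by case/andP: hy. Qed.

Definition aa := restr M 0 x y 1.
Definition ss := restr M x y x y.
Definition al := V2 M 0 x y 1.
Definition be := V2 M x y x y.
Definition ga := Num.min al be.
Definition Cs u v := B u v - ga / al * aa u v - ga / be * ss u v
  + ga / (al * be) * (aa u 1 * ss 1 v + ss u 1 * aa 1 v).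

Lemma al_ge0 : 0 <= al.
Proof. exact: inc2_M 0 x y 1 i01_0 hx hy i01_1 x0 y1. Qed.
Lemma be_ge0 : 0 <= be.
Proof. exact: inc2_M x y x y hx hy hx hy xy xy. Qed.

Lemma inc2_aa : inc2 aa.
Proof. exact: (inc2_restr M 0 x y 1 i01_0 hx hy i01_1 x0 y1 inc2_M). Qed.
Lemma inc2_ss : inc2 ss.
Proof. exact: (inc2_restr M x y x y hx hy hx hy xy xy inc2_M). Qed.

Lemma aa_u0 u : aa u 0 = 0.
Proof. by rewrite /aa /restr (clamp_lo y1 y0) V2yy. Qed.
Lemma aa_0v v : aa 0 v = 0.
Proof. by rewrite /aa /restr (clamp_lo x0 (lexx _)) V2xx. Qed.
Lemma ss_u0 u : ss u 0 = 0.
Proof. by rewrite /ss /restr (clamp_lo xy x0) V2yy. Qed.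
Lemma ss_0v v : ss 0 v = 0.
Proof. by rewrite /ss /restr (clamp_lo xy x0) V2xx. Qed.

Lemma aa_le_y {u t} : t <= y -> aa u t = 0.
Proof. by move=> ty; rewrite /aa /restr (clamp_lo y1 ty) V2yy. Qed.
Lemma aa_ge_x {t v} : x <= t -> aa t v = aa 1 v.
Proof. by move=> xt; rewrite /aa /restr (clamp_hi x0 xt) (clamp_hi x0 x1). Qed.
Lemma aa_u1_x {t} : x <= t -> aa t 1 = al.
Proof.
by move=> xt; rewrite /aa /restr (clamp_hi x0 xt) (clamp_hi y1 (lexx _)).
Qed.
Lemma ss_le_x {u t} : t <= x -> ss u t = 0.
Proof. by move=> tx; rewrite /ss /restr (clamp_lo xy tx) V2yy. Qed.
Lemma ss_le_x' {t v} : t <= x -> ss t v = 0.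
Proof. by move=> tx; rewrite /ss /restr (clamp_lo xy tx) V2xx. Qed.
Lemma ss_ge_y {t v} : y <= t -> ss t v = ss 1 v.
Proof. by move=> yt; rewrite /ss /restr (clamp_hi xy yt) (clamp_hi xy y1). Qed.
Lemma ss_ge_y' {u t} : y <= t -> ss u t = ss u 1.
Proof. by move=> yt; rewrite /ss /restr (clamp_hi xy yt) (clamp_hi xy y1). Qed.
Lemma ss_11 : ss 1 1 = be.
Proof.
by rewrite /ss /restr (clamp_hi xy y1).
Qed.
Lemma aa_11 : aa 1 1 = al.
Proof. exact: aa_u1_x. Qed.

Lemma ss_mid {t} : x <= t -> t <= y -> ss t t = ss 1 t.
Proof.
move=> xt ty; rewrite /ss /restr (clamp_id xt ty) (clamp_hi xy y1) /V2.
have ht : in01 t by apply/andP; split; [exact: le_trans x0 xt|exact: le_trans ty y1].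
rewrite (M_ge ht ht (lexx t)) (M_ge hy ht ty) (M_ge hy hx xy) (M_ge ht hx xt); lra.
Qed.

Lemma ndec_col (G : R -> R -> R) : inc2 G -> (forall u, G u 0 = 0) -> ndec (fun u => G u 1).
Proof.
move=> hG h0' u v hu hv uv; have := hG u v 0 1 hu hv i01_0 i01_1 uv ler01.
rewrite /V2 !h0'; lra.
Qed.

Lemma ndec_row (G : R -> R -> R) : inc2 G -> (forall v, G 0 v = 0) -> ndec (fun v => G 1 v).
Proof.
move=> hG h0' u v hu hv uv; have := hG 0 1 u v i01_0 i01_1 hu hv ler01 uv.
rewrite /V2 !h0'; lra.
Qed.

Lemma restr_aa_ss u v : restr aa x y x y u v = 0.
Proof.
rewrite /restr V2_restr.
have cx : forall w, clamp 0 x (clamp x y w) = x.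
  by move=> w; apply: clamp_hi x0 _; have /andP[] := clamp_in (u:=w) xy.
by rewrite cx (clamp_hi x0 (lexx x)) V2xx.
Qed.

Lemma inc2_Mas : inc2 (fun u v => M u v - aa u v - ss u v).
Proof.
have h1 := inc2_sub_restr M 0 x y 1 i01_0 hx hy i01_1 x0 y1 inc2_M.
have h2 := inc2_sub_restr _ x y x y hx hy hx hy xy xy h1.
apply: (inc2_ext _ h2) => u v _ _.
have -> : restr (fun u0 v0 => M u0 v0 - restr M 0 x y 1 u0 v0) x y x y u v
   = ss u v - restr aa x y x y u v.
  by rewrite /ss /aa; unfold restr, V2; ring.
rewrite restr_aa_ss /aa; ring.
Qed.

Lemma Cs_good : 0 < al -> 0 < be ->
  is_copula Cs /\ (forall t, in01 t -> Cs t t = delta t) /\ Cs x y = B x y + ga.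
Proof.
move=> alp bep.
have al0 : al != 0 by rewrite gt_eqF.
have be0 : be != 0 by rewrite gt_eqF.
have gal : ga <= al by rewrite /ga ge_min lexx.
have gbe : ga <= be by rewrite /ga ge_min lexx orbT.
have ga0 : 0 <= ga by rewrite /ga le_min !ltW.
split; [|split].
- apply: copula_of.
  + have e : forall u v, in01 u -> in01 v ->
      (fun u v => (Lt u v + (M u v - aa u v - ss u v)) + ((al - ga) / al * aa u v
        + (be - ga) / be * ss u v) + ga / (al * be) * (aa u 1 * ss 1 v + ss u 1 * aa 1 v)) u v = Cs u v.
      move=> u v _ _; rewrite /Cs /B /=; field; by rewrite al0 be0.
    apply: (inc2_ext e).
    apply: inc2D; first apply: inc2D.
    * exact: inc2D inc2_Lt inc2_Mas.
    * apply: inc2D.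
      -- apply: inc2Z; last exact: inc2_aa.
         by apply: divr_ge0; [rewrite subr_ge0 | exact: ltW].
      -- apply: inc2Z; last exact: inc2_ss.
         by apply: divr_ge0; [rewrite subr_ge0 | exact: ltW].
    * apply: inc2Z; first by apply: divr_ge0 => //; apply: mulr_ge0; apply: ltW.
      apply: inc2D; apply: inc2_prod.
      -- exact: ndec_col inc2_aa aa_u0.
      -- exact: ndec_row inc2_ss ss_0v.
      -- exact: ndec_col inc2_ss ss_u0.
      -- exact: ndec_row inc2_aa aa_0v.
  + move=> u hu; have /andP[u0 u1] := hu.
    have [b1 [b2 [b3 b4]]] := B_copula.2.1 u hu.
    rewrite /Cs b1 b2 b3 b4 aa_u0 ss_u0 aa_0v ss_0v !(aa_u0 1) !(ss_u0 1) !(aa_0v 1) !(ss_0v 1).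
    rewrite ss_11 aa_11; split; [|split; [|split]].
    * ring.
    * ring.
    * field; by rewrite al0 be0.
    * field; by rewrite al0 be0.
- move=> t ht; have /andP[t0 t1] := ht.
  rewrite /Cs B_diag //.
  case: (leP t x) => tx.
    rewrite !(aa_le_y (le_trans tx xy)) !(ss_le_x tx) !(ss_le_x' tx); ring.
  case: (leP t y) => ty.
    rewrite (aa_le_y ty) (ss_mid (ltW tx) ty) (aa_u1_x (ltW tx)) (aa_le_y (u:=1) ty).
    field; by rewrite al0 be0.
  rewrite (aa_ge_x (ltW (le_lt_trans xy ty))) (ss_ge_y (ltW ty)) (ss_ge_y' (ltW ty)) ss_11.
  rewrite (aa_u1_x (ltW (le_lt_trans xy ty))).
  rewrite (ss_ge_y (t:=t) (v:=1) (ltW ty)) ss_11.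
  field; by rewrite al0 be0.
- rewrite /Cs (aa_le_y (lexx y)) (ss_le_x' (lexx x)) (ss_le_x' (v:=1) (lexx x)) (aa_u1_x (lexx x)).
  rewrite /ss /restr (clamp_hi xy y1) (clamp_id xy (lexx y)) -/be.
  field; by rewrite al0 be0.
Qed.

End Swap.

Lemma value x y : in01 x -> in01 y -> x <= y ->
  B x y + ga x y = Num.min x (Num.min y (y - 2^-1 * (h x + h y + tv x y))).
Proof.
move=> hx hy xy; have /andP[x0 x1] := hx; have /andP[y0 y1] := hy.
set m := Num.min (Pp x) (Nn y).
have Mxy : M x y = phi x + m by rewrite /M (min_l (phi_ndec _ _ hx hy xy)).
have Bxy : B x y = phi x + m + Nn x by rewrite /B Mxy (Lt_le hx hy xy).
have eal : al x y = Pp x - m.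
  rewrite /al /V2 (M_u1 hx) (M_0v i01_1) (M_0v hy) Mxy; lra.
have ebe : be x y = phi y + Nn y - phi x - m.
  rewrite /be /V2 (M_ge hy hy (lexx y)) (M_ge hy hx xy) (M_ge hx hx (lexx x)) Mxy; lra.
have [e1 e2 e3] := inc_facts hx hy xy.
have tvpos : 0 <= tv x y by apply: le_trans e2.
have hxp := h_ge0 hx; have hyp := h_ge0 hy.
have E : y - 2^-1 * (h x + h y + tv x y) = phi y + Nn y + Nn x.
  rewrite /phi /Nn e1; lra.
have Ey : y - 2^-1 * (h x + h y + tv x y) <= y by lra.
rewrite (min_r Ey) E /ga Bxy eal ebe.
have sx := sumPN x.
case: (leP (Pp x - m) (phi y + Nn y - phi x - m)) => c1.
- rewrite min_l; lra.
- rewrite min_r; lra.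
Qed.

Lemma ub_part (C : R -> R -> R) : is_copula C -> (forall t, in01 t -> C t t = delta t) ->
  forall b, in01 b -> forall s a, in01 a -> itv_partition a b s ->
  C a b <= b - 2^-1 * (h a + h b + variation a b h s).
Proof.
move=> [_ [hb2 hC]] hd b hb; have /andP[b0 b1] := hb.
elim => [|t s IH] a ha hs.
  rewrite variation_nil -(itv_partition_nil hs) hd // /delta_hat; lra.
have ht := itv_partition_cons hs.
have at' : a < t by case: hs => /= /andP[].
have tb := itv_partition_le ht.
have /andP[a0 a1] := ha.
have htt : in01 t by apply/andP; split; [exact: le_trans a0 (ltW at')|exact: le_trans tb b1].
have IH' := IH t htt ht.
rewrite variation_cons.
have S1 := hC a t t b ha htt htt hb (ltW at') tb.
have [z1 [z2 [z3 z4]]] := hb2 t htt.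
have [w1 [w2 [w3 w4]]] := hb2 a ha.
have S2 := hC a t 0 t ha htt i01_0 htt (ltW at') (le_trans a0 (ltW at')).
have S3 := hC a 1 a t ha i01_1 ha htt a1 (ltW at').
have dt := hd t htt; have da := hd a ha.
move: IH'; rewrite /delta_hat => IH'.
case: (lerP 0 (delta_hat delta t - delta_hat delta a)) => c; 
  [rewrite ger0_norm // | rewrite ltr0_norm //]; move: c; rewrite /delta_hat => c; lra.
Qed.

Lemma ub (C : R -> R -> R) x y : in01 x -> in01 y -> x <= y ->
  is_copula C -> (forall t, in01 t -> C t t = delta t) ->
  C x y <= Num.min x (Num.min y (y - 2^-1 * (h x + h y + tv x y))).
Proof.
move=> hx hy xy hcop hd; have /andP[x0 x1] := hx; have /andP[y0 y1] := hy.
have [_ [hb2 hC]] := hcop.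
have [z1 [z2 [z3 z4]]] := hb2 x hx.
have [w1 [w2 [w3 w4]]] := hb2 y hy.
have S1 := hC 0 x y 1 i01_0 hx hy i01_1 x0 y1.
have S2 := hC x 1 0 y hx i01_1 i01_0 hy x1 y0.
have [k1 [k2 [k3 k4]]] := hb2 0 i01_0.
have [l1 [l2 [l3 l4]]] := hb2 1 i01_1.
have T : (total_variation x y h <= (2 * (y - C x y) - h x - h y)%:E)%E.
  apply: ge_ereal_sup => _ [_ [s hs <-] <-]; rewrite lee_fin.
  have := ub_part C hcop hd y hy s x hx hs; lra.
have T' : tv x y <= 2 * (y - C x y) - h x - h y.
  by rewrite -lee_fin tvE.
rewrite !le_min; apply/andP; split; [|apply/andP; split]; lra.
Qed.

Lemma main_le x y : in01 x -> in01 y -> x <= y ->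
  Cbar delta x y = Num.min x (Num.min y (y - 2^-1 * (h x + h y + tv x y))).
Proof.
move=> hx hy xy.
set m := Num.min x _.
rewrite /Cbar; set S := (X in sup X = _).
  have ex : S m.
  case: (ltP 0 (al x y)) => c1; last first.
    exists B; first by split; [exact: B_copula|exact: B_diag].
    have e : al x y = 0 by apply/eqP; rewrite eq_le c1 (al_ge0 x y hx hy).
    rewrite /m -value // /ga e min_l ?addr0 //; exact: (be_ge0 x y hx hy xy).
  case: (ltP 0 (be x y)) => c2; last first.
    exists B; first by split; [exact: B_copula|exact: B_diag].
    have e : be x y = 0 by apply/eqP; rewrite eq_le c2 (be_ge0 x y hx hy xy).
    rewrite /m -value // /ga e min_r ?addr0 //; exact: (al_ge0 x y hx hy).
  have [cp [cd cv]] := Cs_good x y hx hy xy c1 c2.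
  by exists (Cs x y); [split|rewrite cv value].
apply/eqP; rewrite eq_le; apply/andP; split.
- apply: ge_sup; first by exists m.
  move=> _ [C [hc hd] <-]; exact: ub.
- apply: ub_le_sup => //; exists m => _ [C [hc hd] <-]; exact: ub.
Qed.

End TV.

Lemma Cbar_sym {R : realType} (delta : R -> R) x y : Cbar delta x y = Cbar delta y x.
Proof.
have tr : forall C : R -> R -> R, is_copula C /\ (forall t, in01 t -> C t t = delta t) ->
    is_copula (fun u v => C v u) /\ (forall t, in01 t -> C t t = delta t).
  move=> C [[h1 [h2 h3]] hd]; split => //; split; [|split].
  - by move=> u v hu hv; apply: h1.
  - by move=> u hu; have [e1 [e2 [e3 e4]]] := h2 u hu.
  - move=> a b c d ha hb hc hd' ab cd; have := h3 c d a b hc hd' ha hb cd ab; lra.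
rewrite /Cbar; congr sup; apply/seteqP; split => _ [C hC <-].
- by exists (fun u v => C v u); [exact: tr|].
- by exists (fun u v => C v u); [exact: tr|].
Qed.

Theorem theorem3p6 (R : realType) (delta : R -> R) (x y : R) :
  is_diagonal_section delta -> in01 x -> in01 y ->
  Cbar delta x y =
  Num.min x (Num.min y
    (Num.max x y - 2^-1 * (delta_hat delta x + delta_hat delta y +
       fine (total_variation (Num.min x y) (Num.max x y) (delta_hat delta))))).
Proof.
move=> Hd hx hy.
case: (leP x y) => xy.
- exact: main_le.
- rewrite Cbar_sym (main_le delta Hd y x hy hx (ltW xy)) /tv.
  by rewrite (addrC (delta_hat delta y)) minA (minC y x) -minA.
Qed.
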